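(* The function $g_1(t)^2$ is increasing and bounded from above and hence converges to a positive constant as $t$ tends to infinity.
   Context: Consider complete Ricci-flat multiple warped product metrics $dt^2 + \sum_{i=1}^{r} g_i^2(t)\, h_i$ on $[0,\infty) \times M_1 \times \cdots \times M_r$ ($r \geq 2$), where $(M_i,h_i)$ are Einstein manifolds of dimension $d_i$ and Einstein constant $\lambda_i$, with $M_1 = S^1$ (so $d_1=1$, $\lambda_1=0$) and $M_2,\ldots,M_r$ closed Einstein manifolds with $\lambda_i>0$, $d_i>1$; $n=\sum_i d_i$. The circle collapses smoothly at $t=0$: $g_1(0)=0$, $\dot g_1(0)=1$, $g_i(0)\neq 0$, $\dot g_i(0)=0$ for $i>1$. With $\xi = -\dot u + \operatorname{tr} L$ (here $u$ constant), variables $X_i = \frac{\sqrt{d_i}}{\xi}\frac{\dot g_i}{g_i}$, $Y_i = \frac{\sqrt{d_i}}{\xi}\frac{1}{g_i}$ satisfy, in a new variable $s$, $X_i' = X_i(\sum_j X_j^2 - 1) + \frac{\lambda_i Y_i^2}{\sqrt{d_i}}$, $Y_i' = Y_i(\sum_j X_j^2 - \frac{X_i}{\sqrt{d_i}})$. The Ricci-flat metrics correspond to the $(r-2)$-parameter family of trajectories emanating (as $s\to-\infty$) from the critical point $X_1=Y_1=1$, $X_i=Y_i=0$ ($i>1$) and lying in the locus $\sum_i X_i^2 + \sum_{i\geq 2}\lambda_i Y_i^2 = 1$, $\sum_i \sqrt{d_i} X_i = 1$, with $X_i, Y_i > 0$; the metric is recovered via $dt = \exp\left(\int_{s^*}^{s}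 \sum_j X_j^2\right) ds$ and $g_i = \frac{\sqrt{d_i}}{Y_i}\exp\left(\int_{s^*}^{s}\sum_j X_j^2\right)$ for a fixed $s^*$, so that $\dot g_i g_i = \frac{\sqrt{d_i}}{\operatorname{tr} L}\frac{X_i}{Y_i^2}$. These trajectories are defined for all $s$, give complete metrics ($t\to\infty$ as $s\to\infty$), and converge as $s\to\infty$ to the point $E$ with $X_1=0$, $X_i=\frac{\sqrt{d_i}}{n-1}$, $Y_i=\sqrt{\frac{n-2}{\lambda_i}}X_i$ ($i\geq 2$). *)

(* Defs.v *)
From Stdlib Require Import Reals Lra.
From Coquelicot Require Import Coquelicot.
Open Scope R_scope.

Fixpoint sumR (k : nat) (f : nat -> R) : R :=
  match k with
  | O => 0
  | S k' => sumR k' f + f k'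
  end.

(* Ricci-flatness of  dt^2 + sum_{i<r} g_i(t)^2 h_i  at time t, where
   (M_i,h_i) is Einstein of dimension d i with Ric(h_i) = lam i * h_i.
   Indices are 0-based: index 0 is the circle factor M_1 = S^1 of the paper.
   - (dt,dt) component:   Ric = - sum_i d_i g_i''/g_i
   - M_i components (per unit vector):
       Ric = - g_i''/g_i - (d_i - 1) (g_i'/g_i)^2
             - (g_i'/g_i) * sum_{j<>i} d_j g_j'/g_j + lam_i / g_i^2. *)
Definition ricci_flat_at (r : nat) (d : nat -> nat) (lam : nat -> R)
    (g g' g'' : nat -> R -> R) (t : R) : Prop :=
  sumR r (fun i => INR (d i) * g'' i t / g i t) = 0 /\
  forall i, (i < r)%nat ->
    - g'' i t / g i t
    - (INR (d i) - 1) * (g' i t / g i t) ^ 2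
    - (g' i t / g i t) *
        sumR r (fun j => if Nat.eqb j i then 0 else INR (d j) * g' j t / g j t)
    + lam i / (g i t) ^ 2 = 0.

(* Main.v *)
Require Import Defs.
From Stdlib Require Import Reals Lra Lia Classical.
From Coquelicot Require Import Coquelicot.
Open Scope R_scope.

Lemma d_eq (f : R -> R) (x l l' : R) : is_derive f x l -> l = l' -> is_derive f x l'.
Proof. intros H ->; exact H. Qed.
Lemma d_plus (f g : R -> R) (x df dg : R) : is_derive f x df -> is_derive g x dg ->
  is_derive (fun t => f t + g t) x (df + dg).
Proof. intros H1 H2; exact (is_derive_plus f g x df dg H1 H2). Qed.
Lemma d_minus (f g : R -> R) (x df dg : R) : is_derive f x df -> is_derive g x dg ->
  is_derive (fun t => f t - g t) x (df - dg).
Proof. intros H1 H2; exact (is_derive_minus f g x df dg H1 H2). Qed.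
Lemma d_mult (f g : R -> R) (x df dg : R) : is_derive f x df -> is_derive g x dg ->
  is_derive (fun t => f t * g t) x (df * g x + f x * dg).
Proof. intros H1 H2; exact (is_derive_mult f g x df dg H1 H2 Rmult_comm). Qed.
Lemma d_const (a x : R) : is_derive (fun _ => a) x 0.
Proof. exact (is_derive_const a x). Qed.
Lemma d_id (x : R) : is_derive (fun t => t) x 1.
Proof. exact (is_derive_id x). Qed.
Lemma d_exp (f : R -> R) (x df : R) : is_derive f x df -> is_derive (fun t => exp (f t)) x (df * exp (f x)).
Proof. intros H. exact (is_derive_comp exp f x _ df (is_derive_exp (f x)) H). Qed.
Lemma d_ln (f : R -> R) (x df : R) : is_derive f x df -> 0 < f x -> is_derive (fun t => ln (f t)) x (df / f x).
Proof. intros H Hp. apply (d_eq _ _ (df * / f x)). exact (is_derive_comp ln f x _ df (is_derive_ln (f x) Hp) H). reflexivity. Qed.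

Lemma der_cont (f : R -> R) (x l : R) : is_derive f x l -> continuity_pt f x.
Proof. intros H. apply is_derive_Reals in H. apply derivable_continuous_pt. exists l. exact H. Qed.

Lemma mono_gen (f df : R -> R) (a b : R) : a <= b ->
  (forall x, a < x < b -> is_derive f x (df x)) ->
  (forall x, a <= x <= b -> continuity_pt f x) ->
  (forall x, a < x < b -> 0 <= df x) -> f a <= f b.
Proof.
  intros Hab Hd Hc Hs.
  set (df' := fun x => if Rlt_dec a x then if Rlt_dec x b then df x else 0 else 0).
  destruct (MVT_gen f a b df') as [c [Hc1 Hc2]].
  - rewrite Rmin_left, Rmax_right by lra. intros x Hx. unfold df'.
    destruct (Rlt_dec a x); [|lra]. destruct (Rlt_dec x b); [|lra]. apply Hd; lra.
  - rewrite Rmin_left, Rmax_right by lra. exact Hc.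
  - assert (0 <= df' c).
    { unfold df'. destruct (Rlt_dec a c); [|lra]. destruct (Rlt_dec c b); [|lra]. apply Hs; lra. }
    assert (0 <= df' c * (b - a)) by (apply Rmult_le_pos; lra). lra.
Qed.

Lemma mono_strict (f df : R -> R) (a b : R) : a < b ->
  (forall x, a < x < b -> is_derive f x (df x)) ->
  (forall x, a <= x <= b -> continuity_pt f x) ->
  (forall x, a < x < b -> 0 < df x) -> f a < f b.
Proof.
  intros Hab Hd Hc Hs.
  assert (Hle : f a <= f b).
  { apply (mono_gen f df); auto; [lra| intros x Hx; left; apply Hs; auto]. }
  set (df' := fun x => if Rlt_dec a x then if Rlt_dec x b then df x else -1 else -1).
  destruct (MVT_gen f a b df') as [c [Hc1 Hc2]].
  - rewrite Rmin_left, Rmax_right by lra. intros x Hx. unfold df'.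
    destruct (Rlt_dec a x); [|lra]. destruct (Rlt_dec x b); [|lra]. apply Hd; lra.
  - rewrite Rmin_left, Rmax_right by lra. exact Hc.
  - rewrite Rmin_left, Rmax_right in Hc1 by lra.
    unfold df' in Hc2. destruct (Rlt_dec a c).
    + destruct (Rlt_dec c b).
      * assert (0 < df c) by (apply Hs; lra).
        assert (0 < df c * (b - a)) by (apply Rmult_lt_0_compat; lra). lra.
      * lra.
    + lra.
Qed.

Lemma mono_d (f df : R -> R) (a b : R) : a <= b ->
  (forall x, a <= x <= b -> is_derive f x (df x)) ->
  (forall x, a < x < b -> 0 <= df x) -> f a <= f b.
Proof.
  intros Hab Hd Hs. apply (mono_gen f df); [exact Hab| |exact (fun x Hx => der_cont _ _ _ (Hd x Hx))|exact Hs].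
  intros x Hx; apply Hd; lra.
Qed.

Lemma sumR_ext k f h : (forall j, (j < k)%nat -> f j = h j) -> sumR k f = sumR k h.
Proof. induction k; simpl; intros H; auto. rewrite IHk by (intros; apply H; lia). rewrite H by lia. auto. Qed.
Lemma sumR_plus k f h : sumR k (fun j => f j + h j) = sumR k f + sumR k h.
Proof. induction k; simpl; [lra|]. rewrite IHk. lra. Qed.
Lemma sumR_scal k a f : sumR k (fun j => a * f j) = a * sumR k f.
Proof. induction k; simpl; [lra|]. rewrite IHk. lra. Qed.
Lemma sumR_opp k f : sumR k (fun j => - f j) = - sumR k f.
Proof. induction k; simpl; [lra|]. rewrite IHk. lra. Qed.
Lemma sumR_nonneg k f : (forall j, (j < k)%nat -> 0 <= f j) -> 0 <= sumR k f.
Proof. induction k; simpl; intros H; [lra|]. assert (0 <= f k) by (apply H; lia).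
  assert (0 <= sumR k f) by (apply IHk; intros; apply H; lia). lra. Qed.
Lemma sumR_le k f h : (forall j, (j < k)%nat -> f j <= h j) -> sumR k f <= sumR k h.
Proof. induction k; simpl; intros H; [lra|]. assert (f k <= h k) by (apply H; lia).
  assert (sumR k f <= sumR k h) by (apply IHk; intros; apply H; lia). lra. Qed.
Lemma sumR_single k i a : (i < k)%nat -> sumR k (fun j => if Nat.eqb j i then a else 0) = a.
Proof.
  induction k; simpl; intros H; [lia|].
  destruct (Nat.eqb k i) eqn:E.
  - apply Nat.eqb_eq in E. subst. rewrite (sumR_ext _ _ (fun _ => 0)).
    + clear. induction i; simpl; lra.
    + intros j Hj. destruct (Nat.eqb j i) eqn:E'; auto. apply Nat.eqb_eq in E'; lia.
  - apply Nat.eqb_neq in E. rewrite IHk by lia. lra.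
Qed.
Lemma sumR_ge_term k i f : (i < k)%nat -> (forall j, (j < k)%nat -> 0 <= f j) -> f i <= sumR k f.
Proof.
  intros Hi Hf. rewrite <- (sumR_single k i (f i)) by auto. apply sumR_le.
  intros j Hj. destruct (Nat.eqb j i) eqn:E.
  - apply Nat.eqb_eq in E; subst; lra.
  - apply Hf; auto.
Qed.
Lemma sumR_derive k (f df : nat -> R -> R) t :
  (forall j, (j < k)%nat -> is_derive (f j) t (df j t)) ->
  is_derive (fun s => sumR k (fun j => f j s)) t (sumR k (fun j => df j t)).
Proof.
  induction k; simpl; intros H.
  - apply d_const.
  - apply d_plus. apply IHk; intros; apply H; lia. apply H; lia.
Qed.
Fixpoint sumN (k : nat) (f : nat -> nat) : nat :=
  match k with O => O | S k' => (sumN k' f + f k')%nat end.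
Lemma sumN_INR k f : INR (sumN k f) = sumR k (fun j => INR (f j)).
Proof. induction k; simpl; auto. rewrite plus_INR, IHk; auto. Qed.

Lemma const_d (f df : R -> R) (a b : R) : a <= b ->
  (forall x, a <= x <= b -> is_derive f x (df x)) ->
  (forall x, a < x < b -> df x = 0) -> f a = f b.
Proof.
  intros Hab Hd H0.
  assert (f a <= f b) by (apply (mono_d f df); [exact Hab|exact Hd|intros x Hx; rewrite (H0 x Hx); lra]).
  assert (- f a <= - f b).
  { apply (mono_d (fun x => - f x) (fun x => - df x)); [exact Hab| |].
    intros x Hx. apply (d_eq _ _ (0 - df x)); [|ring]. apply (is_derive_ext (fun y => 0 - f y)); [intros y; unfold Rminus; rewrite Rplus_0_l; reflexivity|].
    apply d_minus; [apply d_const|apply Hd; auto].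
    intros x Hx; rewrite (H0 x Hx); lra. }
  lra.
Qed.
Lemma d_ext (f h : R -> R) (x l : R) : (forall t : R, f t = h t) -> is_derive f x l -> is_derive h x l.
Proof. intros H1 H2. exact (is_derive_ext f h x l H1 H2). Qed.

Theorem lemma4p7 (r : nat) (d : nat -> nat) (lam : nat -> R)
    (g g' g'' : nat -> R -> R)
    (Hr : (2 <= r)%nat)
    (Hd0 : d 0%nat = 1%nat) (Hlam0 : lam 0%nat = 0)
    (Hdi : forall i, (1 <= i < r)%nat -> (1 < d i)%nat /\ 0 < lam i)
    (Hder : forall i, (i < r)%nat -> forall t,
        is_derive (g i) t (g' i t) /\ is_derive (g' i) t (g'' i t))
    (Hpos : forall i, (i < r)%nat -> forall t, 0 < t -> 0 < g i t)
    (Hg0 : g 0%nat 0 = 0) (Hg'0 : g' 0%nat 0 = 1)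
    (Hgi0 : forall i, (1 <= i < r)%nat -> g i 0 <> 0 /\ g' i 0 = 0)
    (Hric : forall t, 0 < t -> ricci_flat_at r d lam g g' g'' t) :
  (forall t1 t2, 0 <= t1 -> t1 < t2 -> (g 0%nat t1) ^ 2 < (g 0%nat t2) ^ 2) /\
  (exists B, forall t, 0 <= t -> (g 0%nat t) ^ 2 <= B) /\
  (exists L, 0 < L /\ is_lim (fun t => (g 0%nat t) ^ 2) p_infty L).
Proof.
  set (c := fun j => if Nat.eqb j 0 then 0 else INR (d j)).
  set (SS := fun t => sumR r (fun j => c j * ln (g j t))).
  set (SS' := fun t => sumR r (fun j => c j * (g' j t / g j t))).
  set (L := fun t => sumR r (fun j => INR (d j) * g' j t / g j t)).
  assert (Hr0 : (0 < r)%nat) by lia.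
  assert (F1 : forall j, (1 <= j < r)%nat -> 0 < g j 0).
  { intros j Hj. destruct (Hgi0 j Hj) as [Hne _].
    destruct (Rtotal_order 0 (g j 0)) as [H|[H|H]]; [exact H|congruence|].
    exfalso. pose proof (der_cont _ _ _ (proj1 (Hder j ltac:(lia) 0))) as Hc.
    unfold continuity_pt, continue_in, limit1_in, limit_in in Hc.
    destruct (Hc (- g j 0 / 2)) as [alp [Halp Hx]]; [lra|].
    specialize (Hx (alp / 2)). assert (0 < g j (alp/2)) by (apply Hpos; [lia|lra]).
    assert (HH : R_dist (g j (alp / 2)) (g j 0) < - g j 0 / 2).
    { apply Hx. split; [split; [exact I|lra]|]. simpl. unfold R_dist. rewrite Rminus_0_r, Rabs_right; lra. }
    unfold R_dist in HH. apply Rabs_def2 in HH. lra. }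
  assert (Fpos : forall j, (1 <= j < r)%nat -> forall t, 0 <= t -> 0 < g j t).
  { intros j Hj t Ht. destruct (Req_dec t 0) as [->|]; [apply F1; auto|apply Hpos; [lia|lra]]. }
  assert (FS : forall t, 0 <= t -> is_derive SS t (SS' t)).
  { intros t Ht. unfold SS, SS'.
    apply (sumR_derive r (fun j s => c j * ln (g j s)) (fun j s => c j * (g' j s / g j s))).
    intros j Hj. destruct j as [|j].
    - unfold c; simpl. apply (d_ext (fun _ => 0)); [intros; simpl; ring|].
      apply (d_eq _ _ 0); [apply d_const|ring].
    - apply (is_derive_scal (fun s => ln (g (S j) s))). apply d_ln.
      apply (proj1 (Hder (S j) ltac:(lia) t)). apply Fpos; [lia|lra]. }
  assert (R0 : forall t, 0 < t -> g'' 0%nat t = - g' 0%nat t * SS' t).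
  { intros t Ht. destruct (Hric t Ht) as [_ Hi]. specialize (Hi 0%nat Hr0).
    rewrite Hd0, Hlam0 in Hi.
    assert (Es : sumR r (fun j => if Nat.eqb j 0 then 0 else INR (d j) * g' j t / g j t) = SS' t).
    { unfold SS'. apply sumR_ext. intros j _. unfold c. destruct (Nat.eqb j 0); unfold Rdiv; ring. }
    rewrite Es in Hi. assert (0 < g 0%nat t) by (apply Hpos; [lia|lra]).
    assert (E : g'' 0%nat t / g 0%nat t = - (g' 0%nat t / g 0%nat t) * SS' t).
    { simpl in Hi. unfold Rdiv in Hi |- *. rewrite Rmult_0_l in Hi. lra. }
    assert (g'' 0%nat t = g 0%nat t * (g'' 0%nat t / g 0%nat t)) by (field; lra).
    rewrite H0, E. field. lra. }
  assert (FP0 : forall t, 0 <= t -> g' 0%nat t * exp (SS t) = exp (SS 0)).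
  { intros t Ht. transitivity (g' 0%nat 0 * exp (SS 0)); [|rewrite Hg'0; ring]. symmetry.
    apply (const_d (fun s => g' 0%nat s * exp (SS s))
      (fun s => g'' 0%nat s * exp (SS s) + g' 0%nat s * (SS' s * exp (SS s)))); [exact Ht| |].
    - intros x Hx. apply (d_mult (g' 0%nat) (fun s => exp (SS s))). apply (proj2 (Hder 0%nat ltac:(lia) x)). apply (d_exp SS). apply FS; lra.
    - intros x Hx. rewrite R0 by lra. ring. }
  assert (Fg0' : forall t, 0 <= t -> 0 < g' 0%nat t).
  { intros t Ht. pose proof (FP0 t Ht). pose proof (exp_pos (SS t)). pose proof (exp_pos (SS 0)). nra. }
  assert (Dg0 : forall t, is_derive (g 0%nat) t (g' 0%nat t)) by (intro t; exact (proj1 (Hder 0%nat Hr0 t))).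
  assert (Fmono : forall t1 t2, 0 <= t1 -> t1 < t2 -> g 0%nat t1 < g 0%nat t2).
  { intros t1 t2 H1 H2. apply (mono_strict (g 0%nat) (g' 0%nat)); [exact H2| | |].
    - intros x Hx; apply Dg0.
    - intros x Hx; exact (der_cont _ _ _ (Dg0 x)).
    - intros x Hx; apply Fg0'; lra. }
  assert (Fnn : forall t, 0 <= t -> 0 <= g 0%nat t).
  { intros t Ht. destruct (Req_dec t 0) as [->|]; [lra|]. left. rewrite <- Hg0. apply Fmono; lra. }
  assert (Part1 : forall t1 t2, 0 <= t1 -> t1 < t2 -> (g 0%nat t1) ^ 2 < (g 0%nat t2) ^ 2).
  { intros t1 t2 H1 H2. pose proof (Fmono t1 t2 H1 H2). pose proof (Fnn t1 H1). nra. }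
  assert (FL_split : forall t, 0 < t -> L t = g' 0%nat t / g 0%nat t + SS' t).
  { intros t Ht. unfold L, SS'.
    rewrite (sumR_ext r _ (fun j => c j * (g' j t / g j t) + (if Nat.eqb j 0 then g' 0%nat t / g 0%nat t else 0))).
    - rewrite sumR_plus, sumR_single by lia. ring.
    - intros j Hj. unfold c. destruct j as [|j]; simpl.
      + rewrite Hd0. simpl. unfold Rdiv; ring.
      + unfold Rdiv; ring. }
  assert (Ri : forall i, (1 <= i < r)%nat -> forall t, 0 < t ->
      g'' i t / g i t = (g' i t / g i t) ^ 2 - (g' i t / g i t) * L t + lam i / (g i t) ^ 2).
  { intros i Hi t Ht. destruct (Hric t Ht) as [_ HR]. specialize (HR i ltac:(lia)).
    assert (Es : sumR r (fun j => if Nat.eqb j i then 0 else INR (d j) * g' j t / g j t)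
                 = L t - INR (d i) * (g' i t / g i t)).
    { unfold L.
      rewrite (sumR_ext r (fun j => INR (d j) * g' j t / g j t)
        (fun j => (if Nat.eqb j i then 0 else INR (d j) * g' j t / g j t) + (if Nat.eqb j i then INR (d i) * g' i t / g i t else 0))).
      - rewrite sumR_plus, sumR_single by lia. unfold Rdiv; ring.
      - intros j _. destruct (Nat.eqb j i) eqn:E; [apply Nat.eqb_eq in E; subst; ring|ring]. }
    rewrite Es in HR. lra. }
  assert (Fgi' : forall i, (1 <= i < r)%nat -> forall t, 0 <= t -> 0 <= g' i t).
  { intros i Hi t Ht.
    destruct (Req_dec t 0) as [->|Ht0]; [rewrite (proj2 (Hgi0 i Hi)); lra|].
    set (E := fun s => exp (SS s - ln (g i s))).
    assert (HF : g' i 0 * g 0%nat 0 * E 0 <= g' i t * g 0%nat t * E t).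
    { apply (mono_d (fun s => g' i s * g 0%nat s * E s)
        (fun s => (g'' i s * g 0%nat s + g' i s * g' 0%nat s) * E s
                  + g' i s * g 0%nat s * ((SS' s - g' i s / g i s) * E s))); [exact Ht| |].
      - intros x Hx. apply (d_mult (fun s => g' i s * g 0%nat s) E).
        + apply (d_mult (g' i) (g 0%nat)). apply (proj2 (Hder i ltac:(lia) x)). apply Dg0.
        + unfold E. apply (d_exp (fun s => SS s - ln (g i s))). apply d_minus. apply FS; lra.
          apply d_ln. apply (proj1 (Hder i ltac:(lia) x)). apply Fpos; [lia|lra].
      - intros x Hx. pose proof (Ri i Hi x ltac:(lra)) as HR. pose proof (FL_split x ltac:(lra)) as HL.
        assert (Hgi : 0 < g i x) by (apply Fpos; [lia|lra]).
        assert (Hg0x : 0 < g 0%nat x) by (apply Hpos; [lia|lra]).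
        assert (Eg : g'' i x = g i x * (g'' i x / g i x)) by (field; lra).
        rewrite HR, HL in Eg. rewrite Eg.
        assert (Hl : 0 < lam i) by (apply Hdi; lia).
        assert (HE : 0 < E x) by (unfold E; apply exp_pos).
        replace ((g i x * ((g' i x / g i x) ^ 2 - g' i x / g i x * (g' 0%nat x / g 0%nat x + SS' x) + lam i / g i x ^ 2) *
          g 0%nat x + g' i x * g' 0%nat x) * E x + g' i x * g 0%nat x * ((SS' x - g' i x / g i x) * E x))
          with (E x * g 0%nat x * (lam i / g i x)) by (field; lra).
        apply Rmult_le_pos; [apply Rmult_le_pos; lra|]. unfold Rdiv; apply Rmult_le_pos; [lra|left; apply Rinv_0_lt_compat; lra]. }
    rewrite Hg0 in HF. assert (0 < g 0%nat t) by (apply Hpos; [lia|lra]).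
    assert (0 < E t) by (unfold E; apply exp_pos).
    assert (0 < g 0%nat t * E t) by (apply Rmult_lt_0_compat; lra). nra. }
  assert (Fx : forall j, (j < r)%nat -> forall t, 0 < t -> 0 <= g' j t / g j t).
  { intros j Hj t Ht. assert (0 < g j t) by (apply Hpos; [lia|lra]).
    assert (0 <= g' j t).
    { destruct j as [|j]; [left; apply Fg0'; lra|apply Fgi'; [lia|lra]]. }
    unfold Rdiv; apply Rmult_le_pos; [lra|left; apply Rinv_0_lt_compat; lra]. }
  assert (FSnn : forall t, 0 < t -> 0 <= SS' t).
  { intros t Ht. unfold SS'. apply sumR_nonneg. intros j Hj. unfold c.
    destruct (Nat.eqb j 0); [lra|]. apply Rmult_le_pos; [apply pos_INR|apply Fx; auto]. }
  assert (FLpos : forall t, 0 < t -> 0 < L t).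
  { intros t Ht. rewrite FL_split by lra. pose proof (FSnn t Ht).
    assert (0 < g 0%nat t) by (apply Hpos; [lia|lra]). pose proof (Fg0' t ltac:(lra)).
    assert (0 < g' 0%nat t / g 0%nat t) by (apply Rdiv_lt_0_compat; lra). lra. }
  set (Q := fun t => sumR r (fun j => INR (d j) * (g' j t / g j t) ^ 2)).
  assert (FL' : forall t, 0 < t -> is_derive L t (- Q t)).
  { intros t Ht. unfold L.
    apply (d_eq _ _ (sumR r (fun j => INR (d j) * ((g'' j t * g j t - g' j t * g' j t) / g j t ^ 2)))).
    - apply (sumR_derive r (fun j s => INR (d j) * g' j s / g j s)
              (fun j s => INR (d j) * ((g'' j s * g j s - g' j s * g' j s) / g j s ^ 2))).
      intros j Hj. apply (d_ext (fun s => INR (d j) * (g' j s / g j s))); [intros; unfold Rdiv; ring|].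
      apply (is_derive_scal (fun s => g' j s / g j s)). apply is_derive_div.
      apply (proj2 (Hder j Hj t)). apply (proj1 (Hder j Hj t)).
      assert (0 < g j t) by (apply Hpos; [lia|lra]). lra.
    - destruct (Hric t Ht) as [Htt _]. unfold Q.
      rewrite (sumR_ext r _ (fun j => INR (d j) * g'' j t / g j t + - (INR (d j) * (g' j t / g j t) ^ 2))).
      + rewrite sumR_plus, Htt, sumR_opp. ring.
      + intros j Hj. assert (0 < g j t) by (apply Hpos; [lia|lra]). field. lra. }
  set (n := sumR r (fun j => INR (d j))).
  assert (Hn1 : 1 <= n).
  { unfold n. assert (INR (d 0%nat) <= sumR r (fun j => INR (d j))).
    { apply (sumR_ge_term r 0 (fun j => INR (d j))); [lia|intros; apply pos_INR]. }
    rewrite Hd0 in H. simpl in H. lra. }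
  assert (FCS : forall t, 0 < t -> L t ^ 2 <= n * Q t).
  { intros t Ht. remember (L t / n) as a eqn:Ha.
    assert (H0 : 0 <= sumR r (fun j => INR (d j) * (g' j t / g j t - a) ^ 2)).
    { apply sumR_nonneg. intros j _. apply Rmult_le_pos; [apply pos_INR|apply pow2_ge_0]. }
    rewrite (sumR_ext r _ (fun j => INR (d j) * (g' j t / g j t) ^ 2 + ((-2 * a) * (INR (d j) * g' j t / g j t) + a ^ 2 * INR (d j)))) in H0
      by (intros; unfold Rdiv; ring).
    rewrite sumR_plus, sumR_plus, sumR_scal, sumR_scal in H0. fold (Q t) in H0. fold (L t) in H0. fold n in H0.
    assert (E2 : - 2 * a * L t + a ^ 2 * n = - (n * a ^ 2)) by (rewrite Ha; field; lra).
    assert (E : L t ^ 2 = n * (n * a ^ 2)) by (rewrite Ha; field; lra). rewrite E.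
    apply Rmult_le_compat_l; [lra|]. nra. }
  assert (FLb : forall t, 1 < t -> L t <= n / (t - 1)).
  { intros t Ht.
    assert (Hm : / L 1 - (1 - 1) / n <= / L t - (t - 1) / n).
    { apply (mono_d (fun s => / L s - (s - 1) / n) (fun s => - (- Q s) / L s ^ 2 - / n)); [lra| |].
      - intros x Hx. apply d_minus. apply is_derive_inv. apply FL'; lra. pose proof (FLpos x ltac:(lra)); lra.
        apply (d_eq _ _ ((1 - 0) / n)). apply (d_ext (fun s => (s - 1) * / n)); [intros; reflexivity|].
        apply (d_eq _ _ ((1 - 0) * / n + (x - 1) * 0)). apply (d_mult (fun s => s - 1) (fun _ => / n)).
        apply d_minus. apply d_id. apply d_const. apply d_const. unfold Rdiv; lra. unfold Rdiv; lra.
      - intros x Hx. pose proof (FCS x ltac:(lra)). pose proof (FLpos x ltac:(lra)).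
        assert (E : - - Q x / L x ^ 2 - / n = (n * Q x - L x ^ 2) / (n * L x ^ 2)) by (field; lra).
        rewrite E. apply Rmult_le_pos; [lra|]. left; apply Rinv_0_lt_compat. nra. }
    pose proof (FLpos 1 ltac:(lra)). pose proof (FLpos t ltac:(lra)).
    assert (0 < / L 1) by (apply Rinv_0_lt_compat; lra).
    assert (H2 : (t - 1) / n < / L t) by lra.
    assert (H3 : (t - 1) * L t < n).
    { apply (Rmult_lt_compat_r (n * L t)) in H2; [|nra].
      replace ((t - 1) / n * (n * L t)) with ((t - 1) * L t) in H2 by (field; lra).
      replace (/ L t * (n * L t)) with n in H2 by (field; lra). exact H2. }
    apply Rle_div_r; lra. }
  set (N := sumN r d).
  assert (HN : INR N = n) by (unfold N, n; apply sumN_INR).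
  assert (HN1 : (1 <= N)%nat).
  { destruct N as [|N0]; [simpl in HN; lra|lia]. }
  destruct N as [|N'] eqn:EN; [lia|].
  assert (H1r : (1 <= 1 < r)%nat) by lia.
  destruct (Hdi 1%nat H1r) as [Hd1 Hlam1].
  assert (Hg1 : forall s, 0 <= s -> 0 < g 1%nat s) by (intros; apply Fpos; auto).
  assert (Hg1' : forall s, 0 <= s -> 0 <= g' 1%nat s) by (intros; apply Fgi'; auto).
  assert (Fy : forall t, 1 < t -> lam 1%nat * (t - 1) / (n + 1) <= g 1%nat t * g' 1%nat t).
  { intros t Ht.
    assert (Hz : g 1%nat 1 * g' 1%nat 1 * (1 - 1) ^ (S N') - lam 1%nat * (1 - 1) ^ (S (S N')) / (n + 1)
              <= g 1%nat t * g' 1%nat t * (t - 1) ^ (S N') - lam 1%nat * (t - 1) ^ (S (S N')) / (n + 1)).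
    { apply (mono_d (fun s => g 1%nat s * g' 1%nat s * (s - 1) ^ (S N') - lam 1%nat * (s - 1) ^ (S (S N')) / (n + 1))
        (fun s => ((g' 1%nat s * g' 1%nat s + g 1%nat s * g'' 1%nat s) * (s - 1) ^ (S N')
                   + g 1%nat s * g' 1%nat s * (INR (S N') * (1 - 0) * (s - 1) ^ N'))
                  - lam 1%nat * (s - 1) ^ (S N'))); [lra| |].
      - intros x Hx. apply d_minus.
        + apply (d_mult (fun s => g 1%nat s * g' 1%nat s) (fun s => (s - 1) ^ (S N'))).
          * apply (d_mult (g 1%nat) (g' 1%nat)). apply (proj1 (Hder 1%nat ltac:(lia) x)). apply (proj2 (Hder 1%nat ltac:(lia) x)).
          * apply (is_derive_pow (fun s => s - 1) (S N') x (1 - 0)). apply d_minus. apply d_id. apply d_const.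
        + auto_derive; [exact I|]. change (match N' with 0%nat => 1 | S _ => INR N' + 1 end) with (INR (S N')).
          rewrite HN. simpl. match goal with |- ?a = ?b => change (@eq R a b) end. unfold Rminus. set (PP := (x + - (1)) ^ N'). field. lra.
      - intros x Hx. set (p := x - 1).
        pose proof (Ri 1%nat H1r x ltac:(lra)) as HR.
        assert (Eg : g'' 1%nat x = g 1%nat x * (g'' 1%nat x / g 1%nat x)) by (pose proof (Hg1 x ltac:(lra)); field; lra).
        rewrite HR in Eg. rewrite Eg.
        pose proof (Hg1 x ltac:(lra)). pose proof (Hg1' x ltac:(lra)).
        assert (Hp : 0 < p) by (unfold p; lra).
        assert (HLp : L x * p <= n) by (pose proof (FLb x ltac:(lra)) as Hb; unfold p; apply Rle_div_r in Hb; lra).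
        rewrite HN.
        replace ((g' 1%nat x * g' 1%nat x + g 1%nat x * (g 1%nat x * ((g' 1%nat x / g 1%nat x) ^ 2 - g' 1%nat x / g 1%nat x * L x + lam 1%nat / g 1%nat x ^ 2))) * p ^ S N' +
          g 1%nat x * g' 1%nat x * (n * (1 - 0) * p ^ N') - lam 1%nat * p ^ S N')
          with (p ^ N' * (2 * (g' 1%nat x) ^ 2 * p + g 1%nat x * g' 1%nat x * (n - L x * p))) by (simpl; set (PN := p ^ N'); field; lra).
        apply Rmult_le_pos. left; apply pow_lt; lra.
        assert (0 <= g 1%nat x * g' 1%nat x) by (apply Rmult_le_pos; lra).
        assert (0 <= g' 1%nat x ^ 2) by apply pow2_ge_0.
        assert (0 <= g 1%nat x * g' 1%nat x * (n - L x * p)) by (apply Rmult_le_pos; lra). nra. }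
    replace (1 - 1) with 0 in Hz by ring. rewrite !pow_i in Hz by lia.
    assert (Hp : 0 < (t - 1) ^ S N') by (apply pow_lt; lra).
    apply (Rmult_le_reg_r ((t - 1) ^ S N')); [exact Hp|].
    replace (lam 1%nat * (t - 1) / (n + 1) * (t - 1) ^ S N') with (lam 1%nat * (t - 1) ^ S (S N') / (n + 1))
      by (simpl; set (PN := (t - 1) ^ N'); field; lra). lra. }
  assert (Fw : forall t, 1 < t -> lam 1%nat * ((t - 1) * (t - 1)) / (n + 1) <= g 1%nat t * g 1%nat t).
  { intros t Ht.
    assert (Hm : g 1%nat 1 * g 1%nat 1 - lam 1%nat * ((1 - 1) * (1 - 1)) / (n + 1)
               <= g 1%nat t * g 1%nat t - lam 1%nat * ((t - 1) * (t - 1)) / (n + 1)).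
    { apply (mono_d (fun s => g 1%nat s * g 1%nat s - lam 1%nat * ((s - 1) * (s - 1)) / (n + 1))
        (fun s => (g' 1%nat s * g 1%nat s + g 1%nat s * g' 1%nat s) - 2 * lam 1%nat * (s - 1) / (n + 1))); [lra| |].
      - intros x Hx. apply d_minus.
        + apply (d_mult (g 1%nat) (g 1%nat)); apply (proj1 (Hder 1%nat ltac:(lia) x)).
        + auto_derive; [exact I|]. change RinvImpl.Rinv with Rinv. field. lra.
      - intros x Hx. pose proof (Fy x ltac:(lra)).
        assert (E : 2 * lam 1%nat * (x - 1) / (n + 1) = 2 * (lam 1%nat * (x - 1) / (n + 1))) by (field; lra).
        rewrite E. lra. }
    replace (1 - 1) with 0 in Hm by ring. pose proof (Hg1 1 ltac:(lra)).
    assert (0 <= g 1%nat 1 * g 1%nat 1) by nra.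
    replace (lam 1%nat * (0 * 0) / (n + 1)) with 0 in Hm by (field; lra). lra. }
  assert (FQ2 : forall t, 0 <= t -> SS 0 - 2 * ln (g 1%nat 0) <= SS t - 2 * ln (g 1%nat t)).
  { intros t Ht.
    apply (mono_d (fun s => SS s - 2 * ln (g 1%nat s)) (fun s => SS' s - 2 * (g' 1%nat s / g 1%nat s))); [exact Ht| |].
    - intros x Hx. apply d_minus. apply FS; lra.
      apply (is_derive_scal (fun s => ln (g 1%nat s))). apply d_ln.
      apply (proj1 (Hder 1%nat ltac:(lia) x)). apply Hg1; lra.
    - intros x Hx.
      assert (H1 : c 1%nat * (g' 1%nat x / g 1%nat x) <= SS' x).
      { unfold SS'. apply (sumR_ge_term r 1 (fun j => c j * (g' j x / g j x))); [lia|].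
        intros j Hj. unfold c. destruct (Nat.eqb j 0); [lra|]. apply Rmult_le_pos; [apply pos_INR|apply Fx; auto; lra]. }
      assert (H2 : 2 <= c 1%nat).
      { unfold c; simpl. replace 2 with (INR 2) by (simpl; ring). apply le_INR. lia. }
      pose proof (Fx 1%nat ltac:(lia) x ltac:(lra)). nra. }
  assert (Hexp : forall t, 0 <= t -> exp (SS t) = exp (SS t - 2 * ln (g 1%nat t)) * (g 1%nat t * g 1%nat t)).
  { intros t Ht. assert (E : g 1%nat t * g 1%nat t = exp (2 * ln (g 1%nat t))).
    { replace (2 * ln (g 1%nat t)) with (ln (g 1%nat t) + ln (g 1%nat t)) by ring.
      rewrite exp_plus, exp_ln; auto. }
    rewrite E, <- exp_plus. f_equal. ring. }
  set (A := g 1%nat 0 * g 1%nat 0 * (n + 1) / lam 1%nat).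
  assert (HA : 0 <= A).
  { unfold A. pose proof (Hg1 0 ltac:(lra)). apply Rmult_le_pos; [|left; apply Rinv_0_lt_compat; lra].
    apply Rmult_le_pos; nra. }
  assert (Fg0b : forall t, 1 < t -> g' 0%nat t <= A / ((t - 1) * (t - 1))).
  { intros t Ht. pose proof (FP0 t ltac:(lra)) as HP. rewrite (Hexp t), (Hexp 0) in HP by lra.
    pose proof (FQ2 t ltac:(lra)) as HQ.
    set (E0 := exp (SS 0 - 2 * ln (g 1%nat 0))) in *. set (Et := exp (SS t - 2 * ln (g 1%nat t))) in *.
    assert (HE : E0 <= Et).
    { unfold E0, Et. destruct (Rle_lt_or_eq_dec _ _ HQ) as [Hl|Hl]; [left; apply exp_increasing; auto|rewrite Hl; lra]. }
    assert (HE0 : 0 < E0) by apply exp_pos.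
    pose proof (Fg0' t ltac:(lra)). pose proof (Fw t Ht). pose proof (Hg1 t ltac:(lra)).
    set (G0 := g 1%nat 0 * g 1%nat 0) in *. set (Gt := g 1%nat t * g 1%nat t) in *.
    assert (H1q : g' 0%nat t * Gt <= G0).
    { assert (g' 0%nat t * Gt * E0 <= g' 0%nat t * Gt * Et).
      { apply Rmult_le_compat_l; [|exact HE]. apply Rmult_le_pos; [lra|unfold Gt; nra]. }
      assert (g' 0%nat t * Gt * E0 <= G0 * E0) by nra.
      apply (Rmult_le_reg_r E0); auto. }
    assert (H2 : g' 0%nat t * (lam 1%nat * ((t - 1) * (t - 1)) / (n + 1)) <= G0).
    { apply Rle_trans with (g' 0%nat t * Gt); auto. apply Rmult_le_compat_l; lra. }
    unfold A. fold G0.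
    assert (0 < (t - 1) * (t - 1)) by nra.
    apply Rle_div_r; [lra|].
    apply (Rmult_le_reg_r (lam 1%nat / (n + 1))). apply Rdiv_lt_0_compat; lra.
    replace (g' 0%nat t * ((t - 1) * (t - 1)) * (lam 1%nat / (n + 1)))
      with (g' 0%nat t * (lam 1%nat * ((t - 1) * (t - 1)) / (n + 1))) by (field; lra).
    replace (G0 * (n + 1) / lam 1%nat * (lam 1%nat / (n + 1))) with G0 by (field; lra). exact H2. }
  assert (Fbig : forall t, 2 <= t -> g 0%nat t <= g 0%nat 2 + A).
  { intros t Ht.
    assert (Hm : - g 0%nat 2 - A / (2 - 1) <= - g 0%nat t - A / (t - 1)).
    { apply (mono_d (fun s => - g 0%nat s - A / (s - 1)) (fun s => (0 - g' 0%nat s) - - A / ((s - 1) * (s - 1)))); [exact Ht| |].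
      - intros x Hx. apply d_minus.
        + apply (d_ext (fun s => 0 - g 0%nat s)); [intros; ring|]. apply d_minus. apply d_const. apply Dg0.
        + auto_derive; [lra|]. change RinvImpl.Rinv with Rinv. field. lra.
      - intros x Hx. pose proof (Fg0b x ltac:(lra)).
        replace (- - A / ((x - 1) * (x - 1))) with (A / ((x - 1) * (x - 1))) by (field; lra). lra. }
    assert (0 <= A / (t - 1)) by (apply Rmult_le_pos; [lra|left; apply Rinv_0_lt_compat; lra]).
    replace (A / (2 - 1)) with A in Hm by (field; lra). lra. }
  set (M := g 0%nat 2 + A).
  assert (FM : forall t, 0 <= t -> 0 <= g 0%nat t <= M).
  { intros t Ht. split; [apply Fnn; auto|]. destruct (Rle_lt_dec 2 t); [apply Fbig; auto|].
    pose proof (Fmono t 2 Ht r0). unfold M; lra. }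
  assert (Part2 : forall t, 0 <= t -> (g 0%nat t) ^ 2 <= M ^ 2).
  { intros t Ht. apply pow_incr. apply FM; auto. }
  split; [exact Part1|]. split; [exists (M ^ 2); exact Part2|].
  set (E := fun y => exists t, 0 <= t /\ y = g 0%nat t ^ 2).
  assert (HEb : bound E) by (exists (M ^ 2); intros y [t [Ht ->]]; apply Part2; auto).
  assert (HEn : exists y, E y) by (exists (g 0%nat 0 ^ 2); exists 0; split; [lra|auto]).
  destruct (completeness E HEb HEn) as [l [Hub Hlub]].
  assert (Hl1 : g 0%nat 1 ^ 2 <= l) by (apply Hub; exists 1; split; [lra|auto]).
  assert (Hp1 : 0 < g 0%nat 1 ^ 2) by (rewrite <- (pow_i 2 ltac:(lia)); rewrite <- Hg0; apply Part1; lra).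
  exists l. split; [lra|].
  apply is_lim_spec. intros eps. simpl.
  destruct (classic (exists t0, 0 <= t0 /\ l - eps < g 0%nat t0 ^ 2)) as [[t0 [Ht0 Hlt]]|Hno].
  - exists t0. intros x Hx.
    assert (g 0%nat t0 ^ 2 <= g 0%nat x ^ 2) by (left; apply Part1; lra).
    assert (g 0%nat x ^ 2 <= l) by (apply Hub; exists x; split; [lra|auto]).
    pose proof (cond_pos eps). apply Rabs_def1; lra.
  - exfalso. assert (l <= l - eps).
    { apply Hlub. intros y [t [Ht ->]]. destruct (Rle_dec (g 0%nat t ^ 2) (l - eps)) as [Hle|Hgt]; auto.
      exfalso; apply Hno; exists t; split; auto; lra. }
    pose proof (cond_pos eps). lra.
Qed.
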